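(* Let $\mathcal{D}$ be a finite set and $n\ge4$, $m\ge0$ integers. The share of $n$-ary relations $R$ on $\mathcal{D}$ with $\mathrm{ter}(R)\le m$ among all $2^{|\mathcal{D}|^n}$ $n$-ary relations on $\mathcal{D}$ is $<1$ when $|\mathcal{D}|>\binom{\frac{3m+n}{2}}{n-1}$, and tends to $0$ as $|\mathcal{D}|\to\infty$. In particular, there exist $n$-ary relations of arbitrarily high ternarity.
   Context: An $n$-ary relation is $R\subseteq\mathcal{D}^\Sigma$ with $|\Sigma|=n$; $\pi_\Gamma$ restricts tuples to $\Gamma$; the join of $R_i\subseteq\mathcal{D}^{\Lambda_i}$ is $\{a\in\mathcal{D}^{\cup\Lambda_i}:a|_{\Lambda_i}\in R_i\ \forall i\}$. Bonds: relations $R_i\subseteq\mathcal{D}^{\Lambda_i}$ are bondable if no attribute lies in three or more $\Lambda_i$; their bond is $\pi_\Gamma[R_1\Join\dots\Join R_m]$ where $\Gamma$ is the set of attributes lying in exactly one $\Lambda_i$. A bond is subternaric if all factors have arity $\le3$. The ternarity $\mathrm{ter}(R)$ is the minimal number of factors of arity $3$ over all representations of $R$ as a subternaric bond, and $\infty$ if none exists. *)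

(* Defs.v *)
From HB Require Import structures.
From mathcomp Require Import all_boot all_order all_algebra.
From mathcomp Require Import boolp.
From Stdlib Require List.
Set Implicit Arguments. Unset Strict Implicit. Unset Printing Implicit Defensive.
Import Order.TTheory GRing.Theory Num.Theory.

(* A tuple over any attribute set is
   represented by a total assignment  nat -> D  (values outside the attribute
   set are irrelevant).  The n-ary relations considered have attribute set
   Sigma = {0, ..., n-1}. *)

(* A factor: an attribute set Lambda (a finite list of attribute names,
   read as a set) together with a relation R_i subset D^Lambda, given as a
   predicate on assignments that depends only on the values on Lambda. *)
Record factor (D : Type) := Factor { fattrs : seq nat; frel : (nat -> D) -> Prop }.

Section Bonds.
Variable D : Type.

Definition rel_on (f : factor D) : Prop :=
  forall a b : nat -> D, {in fattrs f, a =1 b} -> (frel f a <-> frel f b).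

Definition arity (f : factor D) : nat := size (undup (fattrs f)).

Definition occ (fs : seq (factor D)) (x : nat) : nat :=
  count (fun f => x \in fattrs f) fs.

Definition bondable (fs : seq (factor D)) : Prop := forall x, occ fs x <= 2.

Definition in_Gamma (fs : seq (factor D)) (x : nat) : bool := occ fs x == 1.

(* the bond pi_Gamma[R_1 join ... join R_m]: a|_Gamma belongs to it iff
   a|_Gamma extends to an assignment b of all attributes with b|_{Lambda_i} in R_i
   for every i *)
Definition bond (fs : seq (factor D)) (a : nat -> D) : Prop :=
  exists b : nat -> D, (forall x, in_Gamma fs x -> a x = b x) /\
                       List.Forall (fun f => frel f b) fs.

Definition subternaric (fs : seq (factor D)) : Prop :=
  List.Forall (fun f => arity f <= 3) fs.

Definition n_ternary (fs : seq (factor D)) : nat := count (fun f => arity f == 3) fs.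
End Bonds.

Definition relation (D : finType) (n : nat) := {set {ffun 'I_n -> D}}.

Definition represents (D : finType) (n : nat) (R : relation D n)
    (fs : seq (factor D)) : Prop :=
  List.Forall (@rel_on D) fs /\ bondable fs /\
  (forall x, in_Gamma fs x = (x < n)%N) /\
  (forall a : nat -> D, [ffun i : 'I_n => a (nat_of_ord i)] \in R <-> bond fs a).

(* ter(R) <= m  (ter(R) = infinity iff no subternaric representation exists) *)
Definition ter_le (D : finType) (n : nat) (R : relation D n) (m : nat) : Prop :=
  exists fs : seq (factor D),
    represents R fs /\ subternaric fs /\ (n_ternary fs <= m)%N.

Definition share (D : finType) (n m : nat) : rat :=
  (#|[set R : relation D n | `[< ter_le R m >] ]|%:R / (2 ^ (#|D| ^ n))%:R)%R.

Definition gbinom (x : rat) (k : nat) : rat :=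
  ((\prod_(i < k) (x - i%:R)) / (k`!)%:R)%R.

(* Main.v *)
Require Import Defs.
From Stdlib Require Import Permutation Classical.
From HB Require Import structures.
From mathcomp Require Import all_boot all_order all_algebra.
From mathcomp Require Import boolp.
From mathcomp Require Import zify.
From mathcomp Require Import ring lra.
Import Order.TTheory GRing.Theory Num.Theory.
Require Import Defs.
Set Implicit Arguments. Unset Strict Implicit. Unset Printing Implicit Defensive.

Section NF.
Variable D : Type.
Implicit Types (fs l : seq (factor D)) (f g : factor D).

Lemma perm_count (p : pred (factor D)) l (l2 : seq (factor D)) : Permutation l l2 -> count p l = count p l2.
Proof. elim => //= [x k1 k2 _ -> | x y k0 | k1 k2 k3 _ -> _ ->] //; lia. Qed.

Lemma perm_Forall (P : factor D -> Prop) l (l2 : seq (factor D)) : Permutation l l2 -> List.Forall P l -> List.Forall P l2.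
Proof. move=> Hp /List.Forall_forall H; apply/List.Forall_forall => x Hx; apply: H.
exact: Permutation_in (Permutation_sym Hp) Hx. Qed.

Lemma perm_occ l (l2 : seq (factor D)) x : Permutation l l2 -> occ l x = occ l2 x.
Proof. by move=> Hp; rewrite /occ (perm_count _ Hp). Qed.

Lemma perm_Gamma l (l2 : seq (factor D)) x : Permutation l l2 -> in_Gamma l x = in_Gamma l2 x.
Proof. by move=> Hp; rewrite /in_Gamma (perm_occ _ Hp). Qed.

Lemma perm_bond l (l2 : seq (factor D)) a : Permutation l l2 -> bond l a -> bond l2 a.
Proof. move=> Hp [b [H1 H2]]; exists b; split.
- by move=> x; rewrite -(perm_Gamma _ Hp); apply: H1.
- exact: perm_Forall Hp H2. Qed.


Definition commonb f g c := (c \in fattrs f) && (c \in fattrs g).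
Definition merge f g : factor D :=
  Factor (filter (fun c => ~~ commonb f g c) (fattrs g ++ fattrs f))
    (fun b => exists b', (forall c, ~~ commonb f g c -> b' c = b c) /\ frel f b' /\ frel g b').

Lemma merge_rel_on f g : rel_on f -> rel_on g -> rel_on (merge f g).
Proof.
move=> Hf Hg a b Hab; split=> -[b' [H1 [H2 H3]]].
- exists (fun c => if commonb f g c then b' c else b c); split; first by move=> c /negbTE ->.
  have Hag : forall c, c \in fattrs f ++ fattrs g -> b' c = (fun c => if commonb f g c then b' c else b c) c.
    move=> c Hc /=; case E: (commonb f g c) => //.
    rewrite H1 ?E // Hab // mem_filter E /= mem_cat orbC.
    by rewrite mem_cat in Hc.
  split; [apply/(Hf b')|apply/(Hg b')] => // c Hc; apply: Hag; rewrite mem_cat Hc ?orbT //.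
- exists (fun c => if commonb f g c then b' c else a c); split; first by move=> c /negbTE ->.
  have Hag : forall c, c \in fattrs f ++ fattrs g -> b' c = (fun c => if commonb f g c then b' c else a c) c.
    move=> c Hc /=; case E: (commonb f g c) => //.
    rewrite H1 ?E // -Hab // mem_filter E /= mem_cat orbC.
    by rewrite mem_cat in Hc.
  split; [apply/(Hf b')|apply/(Hg b')] => // c Hc; apply: Hag; rewrite mem_cat Hc ?orbT //.
Qed.

Lemma occ_merge f g rest c : bondable [:: f, g & rest] ->
  occ (merge f g :: rest) c = if commonb f g c then 0 else occ [:: f, g & rest] c.
Proof.
move=> Hb; have := Hb c; rewrite /occ /= mem_filter mem_cat /commonb.
by case: (c \in fattrs f); case: (c \in fattrs g) => /=; lia.
Qed.

Lemma Gamma_merge f g rest c : bondable [:: f, g & rest] ->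
  in_Gamma (merge f g :: rest) c = in_Gamma [:: f, g & rest] c.
Proof.
move=> Hb; rewrite /in_Gamma occ_merge //; case E: (commonb f g c) => //.
move: E; rewrite /occ /= /commonb => /andP [-> ->]; by [].
Qed.

Lemma bondable_merge f g rest : bondable [:: f, g & rest] -> bondable (merge f g :: rest).
Proof. move=> Hb c; rewrite occ_merge //; case: ifP => // _; exact: Hb. Qed.

Lemma bond_merge f g rest a : List.Forall (@rel_on D) rest -> bondable [:: f, g & rest] ->
  (bond (merge f g :: rest) a <-> bond [:: f, g & rest] a).
Proof.
move=> Hr Hb; split.
- move=> [b [H1 /List.Forall_cons_iff [[b' [K1 [K2 K3]]] H4]]].
  exists b'; split.
    move=> x Hx; rewrite H1 ?K1 ?Gamma_merge //.
    apply/negP=> /andP [E1 E2]; move: Hx; rewrite /in_Gamma /occ /= E1 E2 /=; lia.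
  constructor => //; constructor => //.
  apply/List.Forall_forall => k Hk.
  move/List.Forall_forall: H4 => /(_ k Hk) Hkb.
  move/List.Forall_forall: Hr => /(_ k Hk) Hkr.
  apply/(Hkr b) => // c Hc; rewrite K1 //; apply/negP => /andP [E1 E2].
  have := Hb c; rewrite /occ /= E1 E2 /=.
  suff : 0 < count (fun f0 => c \in fattrs f0) rest by case: (count _ rest) => //=; lia.
  elim: rest Hk {Hkr Hkb Hb H1} => //= k0 r IH [->|/IH]; rewrite ?Hc /=; lia.
- move=> [b [H1 /List.Forall_cons_iff [Hf /List.Forall_cons_iff [Hg H4]]]].
  exists b; split; first by move=> x; rewrite Gamma_merge //; apply: H1.
  constructor => //; exists b; split => //.
Qed.

Lemma size_undup_le2 (l : seq nat) i y z : size (undup l) <= 2 -> i \in l -> y \in l -> z \in l ->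
  i != y -> (z == i) || (z == y).
Proof.
move=> Hs Hi Hy Hz Hiy; apply/negPn/negP; rewrite negb_or => /andP [Hzi Hzy].
have : size [:: i; y; z] <= size (undup l).
  apply: uniq_leq_size; first by rewrite /= !inE negb_or Hiy eq_sym Hzi eq_sym Hzy.
  by move=> w; rewrite !inE mem_undup => /or3P [] /eqP ->.
by rewrite /= ltnNge Hs.
Qed.

Lemma arity_merge f g x : x \in fattrs f -> x \in fattrs g -> arity f <= 2 ->
  arity (merge f g) <= arity g.
Proof.
move=> Hxf Hxg Haf; rewrite /arity /=.
set F' := filter (fun c => c \notin fattrs g) (undup (fattrs f)).
set G' := filter (fun c => c != x) (undup (fattrs g)).
have H1 : size (undup (filter (fun c => ~~ commonb f g c) (fattrs g ++ fattrs f))) <= size (G' ++ F').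
  apply: uniq_leq_size; first exact: undup_uniq.
  move=> c; rewrite mem_undup mem_filter => /andP [Hc Hc'].
  rewrite mem_cat !mem_filter !mem_undup; move: Hc Hc'; rewrite /commonb mem_cat.
  case Cg: (c \in fattrs g) => /=; rewrite ?andbT ?andbF ?orbF.
    move=> Hcf _; apply/eqP => E; by rewrite E Hxf in Hcf.
  by move=> _ ->.
have H2 : size G' = (size (undup (fattrs g))).-1.
  rewrite /G' size_filter.
  have := count_predC (fun c => c != x) (undup (fattrs g)).
  have -> : count (predC (fun c => c != x)) (undup (fattrs g)) = 1.
    have -> : count (predC (fun c => c != x)) (undup (fattrs g)) = count_mem x (undup (fattrs g)).
      by apply: eq_count => c /=; rewrite negbK.
    by rewrite count_uniq_mem ?undup_uniq // mem_undup Hxg.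
  lia.
have H3 : size F' < size (undup (fattrs f)).
  rewrite /F' size_filter -(count_predC (fun c => c \notin fattrs g)).
  suff : 0 < count (predC (fun c => c \notin fattrs g)) (undup (fattrs f)) by lia.
  rewrite -has_count; apply/hasP; exists x; rewrite ?mem_undup //= negbK. exact: Hxg.
have H4 : 0 < size (undup (fattrs g)).
  by case E: (undup (fattrs g)) => //; have := Hxg; rewrite -mem_undup E.
rewrite size_cat in H1; rewrite /arity in Haf.
apply: (leq_trans H1); rewrite H2.
have HF : size F' <= 1 by rewrite -ltnS; exact: leq_trans H3 Haf.
by case: (size (undup (fattrs g))) H4 => // k _; rewrite /= -(addn1 k) leq_add2l.
Qed.


Definition NF fs := forall f, List.In f fs -> arity f <= 2 ->
  forall x, x \in fattrs f -> occ fs x = 1.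

Lemma count_In (p : pred (factor D)) l : 0 < count p l -> exists g, List.In g l /\ p g.
Proof.
elim: l => //= g l IH; case E: (p g) => /=; first by exists g; split; [left|].
by move/IH => [h [H1 H2]]; exists h; split; [right|].
Qed.

Lemma In_count (p : pred (factor D)) l g : List.In g l -> p g -> 0 < count p l.
Proof.
move=> Hin Hp; elim: l Hin => //= h l IH [->|/IH H]; first by rewrite Hp.
by apply: leq_trans H (leq_addl _ _).
Qed.

Lemma extract l f : List.In f l -> exists rest, Permutation l (f :: rest).
Proof.
move=> Hin; have [l1 [l2 E]] := List.in_split f l Hin; rewrite E; exists (l1 ++ l2).
by apply: Permutation_sym; apply: Permutation_middle.
Qed.

Lemma subter_perm l (l2 : seq (factor D)) : Permutation l l2 -> subternaric l -> subternaric l2.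
Proof. exact: perm_Forall. Qed.

Lemma normalize fs : List.Forall (@rel_on D) fs -> bondable fs -> subternaric fs ->
  exists fs', [/\ List.Forall (@rel_on D) fs', bondable fs', subternaric fs',
    n_ternary fs' <= n_ternary fs & [/\ (forall x, in_Gamma fs' x = in_Gamma fs x),
    (forall a, bond fs' a <-> bond fs a) & NF fs']].
Proof.
move: {2}(size fs) (leqnn (size fs)) => k; elim: k fs.
  move=> [|//] _ Hr Hb Hs; exists [::]; split => //; split => //.
move=> k IH fs Hsz Hr Hb Hs.
case: (Classical_Prop.classic (NF fs)) => HNF.
  by exists fs; split => //; split.
have [f [Hf [Haf [x [Hx Hocc]]]]] : exists f, List.In f fs /\ arity f <= 2 /\
    exists x, x \in fattrs f /\ occ fs x <> 1.
  apply: Classical_Prop.NNPP => H; apply: HNF => f Hf Haf x Hx; apply: Classical_Prop.NNPP => Ho; apply: H.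
  by exists f; split => //; split => //; exists x.
have [rest Hp1] := extract Hf.
have Ho2 : occ (f :: rest) x = 2.
  have := Hb x; have := In_count (p:=fun f => x \in fattrs f) Hf Hx.
  rewrite -/(occ fs x) (perm_occ x Hp1); move: Hocc; rewrite (perm_occ x Hp1); lia.
have [g [Hg Hxg]] : exists g, List.In g rest /\ x \in fattrs g.
  apply: count_In; move: Ho2; rewrite /occ /= Hx; lia.
have [rest' Hp2] := extract Hg.
have Hp : Permutation fs [:: f, g & rest'].
  apply: Permutation_trans Hp1 _; exact: perm_skip.
have Hr' := perm_Forall Hp Hr.
have Hb' : bondable [:: f, g & rest'] by move=> c; rewrite -(perm_occ c Hp).
have Hs' := subter_perm Hp Hs.
move/List.Forall_cons_iff: Hr' => [Hrf /List.Forall_cons_iff [Hrg Hrr]].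
move/List.Forall_cons_iff: Hs' => [Hsf /List.Forall_cons_iff [Hsg Hsr]].
have Hag := arity_merge Hx Hxg Haf.
have [||||fs' [H1 H2 H3 H4 [H5 H6 H7]]] := IH (merge f g :: rest').
- have LS : forall l : seq (factor D), length l = size l by elim => //= ? ? ->.
  have := Permutation_length Hp; rewrite !LS /= => E.
  by move: Hsz; rewrite E; lia.
- by constructor => //; apply: merge_rel_on.
- exact: bondable_merge.
- by constructor => //; rewrite /arity; apply: leq_trans Hag Hsg.
exists fs'; split => //.
- apply: (leq_trans H4); rewrite /n_ternary (perm_count _ Hp) /=.
  suff : (arity (merge f g) == 3) <= (arity g == 3) by lia.
  move: Hsg; rewrite -/(arity g) => Hsg.
  by case: eqP => // E; rewrite E in Hag; rewrite eqn_leq Hsg Hag.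
split => //.
- by move=> c; rewrite H5 Gamma_merge // (perm_Gamma c Hp).
- move=> a; rewrite H6 bond_merge //; split; apply: perm_bond => //.
  exact: Permutation_sym.
Qed.

End NF.

Lemma count1_uniq (D : Type) (p : pred (factor D)) l f g : count p l = 1 ->
  List.In f l -> p f -> List.In g l -> p g -> f = g.
Proof.
elim: l => //= h l IH Hc [Ef|Hf] Pf [Eg|Hg] Pg; subst => //.
- have := In_count Hg Pg; move: Hc; rewrite Pf; case: (count p l) => //.
- have := In_count Hf Pf; move: Hc; rewrite Pg; case: (count p l) => //.
- apply: IH => //; move: Hc; have := In_count Hf Pf.
  by case: (p h); case: (count p l).
Qed.

Section Rep.
Variables (D : finType) (n : nat).
Implicit Types (R : relation D n) (fs : seq (factor D)) (f g : factor D).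

Lemma normal_rep R fs : represents R fs -> subternaric fs ->
  exists fs', [/\ represents R fs', subternaric fs', n_ternary fs' <= n_ternary fs & NF fs'].
Proof.
move=> [Hr [Hb [HG Hbd]]] Hs.
have [fs' [H1 H2 H3 H4 [H5 H6 H7]]] := normalize Hr Hb Hs.
exists fs'; split => //; split => //; split => //; split.
- by move=> x; rewrite H5.
- by move=> a; rewrite H6.
Qed.

Lemma occ_pos fs f x : List.In f fs -> x \in fattrs f -> 0 < occ fs x.
Proof. move=> Hf Hx; exact: (In_count (p:=fun f => x \in fattrs f)) Hf Hx. Qed.

Lemma NF_small_free R fs f x : represents R fs -> NF fs -> List.In f fs -> arity f <= 2 ->
  x \in fattrs f -> x < n.
Proof.
move=> [_ [_ [HG _]]] HNF Hf Ha Hx; rewrite -HG /in_Gamma (HNF f) //.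
Qed.

Lemma rep_bond R fs (a : {ffun 'I_n -> D}) (i0 : 'I_n) : represents R fs ->
  (a \in R <-> bond fs (fun x => a (insubd i0 x))).
Proof.
move=> [_ [_ [_ Hbd]]]; rewrite -Hbd.
suff -> : [ffun i : 'I_n => a (insubd i0 (nat_of_ord i))] = a by [].
by apply/ffunP => i; rewrite ffunE valKd.
Qed.

End Rep.

Lemma In_flatten (D : Type) (h : factor D -> seq nat) l k w :
  List.In k l -> w \in h k -> w \in flatten (map h l).
Proof. elim: l => //= k0 l IH [->|/IH H] Hw; rewrite mem_cat ?Hw ?H ?orbT //. Qed.

Lemma size_flat3 (D : Type) (l : seq (factor D)) :
  size (flatten (map (fun f => undup (fattrs f)) (filter (fun f => arity f == 3) l))) = 3 * n_ternary l.
Proof.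
rewrite /n_ternary; elim: l => //= k l IH; case E: (arity k == 3) => /=.
  by rewrite size_cat IH; move/eqP: E; rewrite /arity => ->; lia.
by rewrite IH.
Qed.

Lemma In_filter (T : Type) (p : pred T) l k : List.In k l -> p k -> List.In k (filter p l).
Proof.
elim: l => //= k0 l IH [->|/IH H] Hp; first by rewrite Hp; left.
by case: ifP => _ //; [right; apply: H|apply: H].
Qed.

Section Eq.
Variables (D : finType) (n m : nat).

Definition Eqrel : relation D n := [set a : {ffun 'I_n -> D} | [forall i, forall j, a i == a j]].

Lemma Eq_not_ter (d0 d1 : D) : d0 != d1 -> 2 < n -> 3 * m < n -> ~ ter_le Eqrel m.
Proof.
move=> Hd Hn3 Hnm [fs [Hrep [Hs Hm]]].
have [fs' [Hrep' Hs' Hm' HNF]] := normal_rep Hrep Hs.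
have i0 : 'I_n by exists 0; lia.
have Har : forall k, List.In k fs' -> arity k <= 3.
  by move=> k Hk; move/List.Forall_forall: Hs' => /(_ k Hk).
have Hrep2 := Hrep'; move: Hrep2 => [Hr [Hb [HG Hbd]]].
have Cl1 : forall f, List.In f fs' -> arity f <= 2 -> fattrs f = [::].
  move=> f Hf Ha; case E: (fattrs f) => [|x xs] //; exfalso.
  have Hx : x \in fattrs f by rewrite E mem_head.
  have [ba [Ga Fa]] : bond fs' (fun y => [ffun _ : 'I_n => d0] (insubd i0 y)).
    by apply/(rep_bond _ i0 Hrep'); rewrite inE; apply/forallP => i; apply/forallP => j; rewrite !ffunE.
  have [bb [Gb Fb]] : bond fs' (fun y => [ffun _ : 'I_n => d1] (insubd i0 y)).
    by apply/(rep_bond _ i0 Hrep'); rewrite inE; apply/forallP => i; apply/forallP => j; rewrite !ffunE.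
  pose a' := [ffun i : 'I_n => if val i \in fattrs f then d0 else d1].
  have Ha' : a' \in Eqrel.
    apply/(rep_bond _ i0 Hrep').
    exists (fun y => if y \in fattrs f then ba y else bb y); split.
      move=> y Hy; have Hyn : y < n by rewrite -HG.
      rewrite ffunE val_insubd Hyn; case: (y \in fattrs f).
        by rewrite -Ga // ffunE.
      by rewrite -Gb // ffunE.
    apply/List.Forall_forall => k Hk.
    move/List.Forall_forall: Hr => /(_ k Hk) Hrk.
    case Hh: (has (fun y => y \in fattrs f) (fattrs k)).
      move/hasP: Hh => [y Hyk Hyf].
      have Ek : k = f.
        apply: (count1_uniq (p:=fun f => y \in fattrs f) _ Hk Hyk Hf Hyf).
        exact: (HNF f Hf Ha y Hyf).
      subst k; apply/(Hrk ba); last by move/List.Forall_forall: Fa => /(_ f Hk).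
      by move=> z Hz /=; rewrite Hz.
    apply/(Hrk bb); last by move/List.Forall_forall: Fb => /(_ k Hk).
    move=> z Hz /=; move/hasPn: Hh => /(_ z Hz) /negbTE -> //.
  have Hxn : x < n := NF_small_free Hrep' HNF Hf Ha Hx.
  case: (pickP (fun j : 'I_n => val j \notin fattrs f)) => [j Hj|Hno].
    move: Ha'; rewrite inE => /forallP /(_ (insubd i0 x)) /forallP /(_ j).
    rewrite !ffunE val_insubd Hxn Hx (negbTE Hj) => /eqP E2.
    by rewrite E2 eqxx in Hd.
  have : size (iota 0 n) <= size (undup (fattrs f)).
    apply: uniq_leq_size; first exact: iota_uniq.
    move=> w; rewrite mem_iota add0n mem_undup => /andP [_ Hw].
    have := Hno (Ordinal Hw); rewrite /= => /negbFE //.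
  rewrite size_iota; move: Ha; rewrite /arity; lia.
have : size (iota 0 n) <= 3 * n_ternary fs'.
  rewrite -size_flat3; apply: uniq_leq_size; first exact: iota_uniq.
  move=> w; rewrite mem_iota add0n => /andP [_ Hw].
  have := HG w; rewrite Hw /in_Gamma => /eqP Ho.
  have [k [Hk Hwk]] : exists k, List.In k fs' /\ w \in fattrs k.
    by apply: count_In; rewrite -/(occ fs' w) Ho.
  have Hk3 : arity k == 3.
    have := Har k Hk; rewrite leq_eqVlt => /orP [//|]; rewrite ltnS => H2.
    by rewrite (Cl1 k Hk H2) in Hwk.
  apply: (In_flatten (k:=k)); last by rewrite mem_undup.
  exact: In_filter.
rewrite size_iota; lia.
Qed.

End Eq.

Lemma In_nth (T : Type) (d : T) l k : List.In k l -> exists j, j < size l /\ nth d l j = k.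
Proof.
elim: l => //= k0 l IH [->|/IH [j [H1 H2]]]; first by exists 0.
by exists j.+1.
Qed.

Lemma nth_In (T : Type) (d : T) l j : j < size l -> List.In (nth d l j) l.
Proof. elim: l j => //= k0 l IH [|j] /= H; [left|right; apply: IH] => //. Qed.

Definition partner (D : Type) (f : factor D) (i : nat) := head i (filter (fun y => y != i) (fattrs f)).

Lemma partner_spec (D : Type) (f : factor D) i z : i \in fattrs f -> arity f <= 2 ->
  z \in fattrs f -> z != i -> z = partner f i.
Proof.
move=> Hi Ha Hz Hzi; rewrite /partner.
case E: (filter (fun y => y != i) (fattrs f)) => [|y ys] /=.
  by have := mem_filter (fun y => y != i) z (fattrs f); rewrite E Hzi Hz.
have : y \in filter (fun y => y != i) (fattrs f) by rewrite E mem_head.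
rewrite mem_filter => /andP [Hyi Hy].
have := size_undup_le2 Ha Hi Hy Hz; rewrite eq_sym Hyi => /(_ isT).
by rewrite (negbTE Hzi) => /eqP.
Qed.

Lemma partner_in (D : Type) (f : factor D) i : partner f i = i \/ partner f i \in fattrs f.
Proof.
rewrite /partner; case E: (filter (fun y => y != i) (fattrs f)) => [|y ys] /=; first by left.
right; have : y \in filter (fun y => y != i) (fattrs f) by rewrite E mem_head.
by rewrite mem_filter => /andP [].
Qed.

Lemma In_filter_inv (T : Type) (p : pred T) l k : List.In k (filter p l) -> List.In k l /\ p k.
Proof.
elim: l => //= k0 l IH; case: ifP => Hp /=.
  by move=> [<-|/IH [H1 H2]]; split => //; [left|right].
by move=> /IH [H1 H2]; split => //; right.
Qed.

Section Count.
Variables (D : finType) (n m : nat).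

Definition KK := (n + 3 * m).+1.
Definition Data := ((({ffun 'I_m -> ('I_KK * 'I_KK * 'I_KK)} * {ffun 'I_m -> {set D * D * D}}) *
   ({ffun 'I_n -> 'I_n} * {ffun 'I_n -> {set D * D}})) * bool)%type.

Definition Pc (dat : Data) (a : {ffun 'I_n -> D}) : Prop :=
  (forall i : 'I_n, (a i, a (dat.1.2.1 i)) \in dat.1.2.2 i) /\
  exists v : nat -> D, (forall i : 'I_n, v i = a i) /\
   forall j : 'I_m, ((v (dat.1.1.1 j).1.1, v (dat.1.1.1 j).1.2), v (dat.1.1.1 j).2) \in dat.1.1.2 j.

Definition Phi (dat : Data) : relation D n := [set a | dat.2 && `[< Pc dat a >] ].

Lemma card_Data : #|{: Data}| = ((KK * KK * KK) ^ m * (2 ^ (#|D| * #|D| * #|D|)) ^ m) *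
   (n ^ n * (2 ^ (#|D| * #|D|)) ^ n) * 2.
Proof.
rewrite !card_prod !card_ffun !card_prod !card_ord.
have Hs : forall T : finType, #|{: {set T}}| = 2 ^ #|T|.
  by move=> T; have := card_powerset [set: T]; rewrite powersetT !cardsT.
by rewrite !Hs !card_prod card_bool.
Qed.


Lemma tern_frel (f : factor D) (b : nat -> D) : rel_on f -> arity f = 3 ->
  let xs := undup (fattrs f) in
  (frel f b <-> frel f (fun x => if x == nth 0 xs 0 then b (nth 0 xs 0)
     else if x == nth 0 xs 1 then b (nth 0 xs 1) else b (nth 0 xs 2))).
Proof.
move=> Hr; rewrite /arity => Ha /=; apply: Hr => z Hz.
have : z \in undup (fattrs f) by rewrite mem_undup.
move: Ha; case: (undup (fattrs f)) => [|x0 [|x1 [|x2 [|? ?]]]] //= _.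
by rewrite !inE => /or3P [] /eqP ->; rewrite ?eqxx //; case: ifP => [/eqP->|]; rewrite ?eqxx //;
  case: ifP => [/eqP->|]; rewrite ?eqxx.
Qed.

Lemma rep_Phi (R : relation D n) : 0 < n -> ter_le R m -> exists dat, R = Phi dat.
Proof.
move=> Hn [fs [Hrep [Hs Hm]]].
have [fs' [Hrep' Hs' Hm' HNF]] := normal_rep Hrep Hs.
have i0 : 'I_n := Ordinal Hn.
have Har : forall k, List.In k fs' -> arity k <= 3.
  by move=> k Hk; move/List.Forall_forall: Hs' => /(_ k Hk).
have Hrep2 := Hrep'; move: Hrep2 => [Hr [Hb [HG Hbd]]].
have Hrel : forall k, List.In k fs' -> rel_on k by move=> k Hk; move/List.Forall_forall: Hr => /(_ k Hk).
pose T := filter (fun f => arity f == 3) fs'.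
pose Sm := filter (fun f => arity f != 3) fs'.
have InT : forall k, List.In k T -> List.In k fs' /\ arity k = 3.
  by move=> k Hk; have [H1 /eqP H2] := In_filter_inv Hk.
have InSm : forall k, List.In k Sm -> List.In k fs' /\ arity k <= 2.
  move=> k Hk; have [H1 H2] := In_filter_inv Hk; split => //.
  by have := Har k H1; rewrite leq_eqVlt (negbTE H2).
pose H := undup (filter (fun x => n <= x) (flatten (map (fun f => undup (fattrs f)) T))).
have HsH : size H <= 3 * m.
  rewrite /H; apply: (leq_trans (size_undup _)); rewrite size_filter.
  apply: (leq_trans (count_size _ _)); rewrite size_flat3; lia.
pose ren x := if x < n then x else n + index x H.
pose unren k := if k < n then k else nth 0 H (k - n).
have renT : forall k x, List.In k T -> x \in fattrs k -> ren x < KK /\ unren (ren x) = x.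
  move=> k x Hk Hx; rewrite /ren /unren /KK; case: ifP => Hxn; first by rewrite Hxn; split => //; lia.
  have HxH : x \in H.
    rewrite mem_undup mem_filter leqNgt Hxn /=; apply: (In_flatten (k:=k)) => //.
    by rewrite mem_undup.
  have := index_mem x H; rewrite HxH => Hi.
  have -> : (n + index x H < n) = false by rewrite ltnNge leq_addr.
  rewrite addKn nth_index //; split => //; move: Hi HsH; clearbody H; lia.
pose f0 := Factor [::] (fun _ : nat -> D => True).
pose xs (f : factor D) := undup (fattrs f).
pose trif (f : factor D) : 'I_KK * 'I_KK * 'I_KK :=
  (inord (ren (nth 0 (xs f) 0)), inord (ren (nth 0 (xs f) 1)), inord (ren (nth 0 (xs f) 2))).
pose Sf (f : factor D) : {set D * D * D} := [set t | `[< frel f (fun x => if x == nth 0 (xs f) 0 then t.1.1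
   else if x == nth 0 (xs f) 1 then t.1.2 else t.2) >] ].
pose tri := [ffun j : 'I_m => if j < size T then trif (nth f0 T j) else (ord0, ord0, ord0)].
pose S := [ffun j : 'I_m => if j < size T then Sf (nth f0 T j) else setT].
pose fo (i : 'I_n) := List.find (fun f => val i \in fattrs f) Sm.
pose p := [ffun i : 'I_n => match fo i with Some f => insubd i (partner f i) | None => i end].
pose B := [ffun i : 'I_n => match fo i with
   Some f => [set uv : D * D | `[< frel f (fun x => if x == val i then uv.1 else uv.2) >] ]
 | None => setT end].
pose c := `[< exists a, a \in R >].
exists (tri, S, (p, B), c).
have Vins : forall (i : 'I_n) x, x < n -> val (insubd i x) = x.
  by move=> i x Hx; rewrite val_insubd Hx.
have Hxs : forall f, arity f = 3 -> forall t, t < 3 -> nth 0 (xs f) t \in fattrs f.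
  by move=> f Ha t Ht; rewrite -mem_undup; apply: mem_nth; rewrite /xs -/(arity f) Ha.
apply/setP => a; rewrite inE /=.
rewrite /c; case: asboolP => [[a1 Ha1]|Hne]; last first.
  by apply/negbTE/negP => Ha; apply: Hne; exists a.
rewrite /=; apply/idP/asboolP.
- move=> Ha; have [b [Gb Fb]] := (rep_bond _ i0 Hrep').1 Ha.
  have Fb' : forall k, List.In k fs' -> frel k b.
    by move=> k Hk; move/List.Forall_forall: Fb => /(_ k Hk).
  have Gb' : forall x, x < n -> a (insubd i0 x) = b x.
    by move=> x Hx; apply: Gb; rewrite HG.
  split.
  + move=> i; rewrite /= !ffunE; case E: (fo i) => [f|]; last by rewrite inE.
    have [Hf Hif] := List.find_some _ _ E; have [Hf' Haf] := InSm f Hf.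
    rewrite inE; apply/asboolP; apply: (proj2 (Hrel f Hf' _ b _)) (Fb' f Hf').
    move=> z Hz /=; case: eqP => [->|/eqP Hzi].
      rewrite -Gb' //; congr (a _); apply/val_inj; rewrite Vins //.
    have Ez := partner_spec Hif Haf Hz Hzi.
    have Hzn := NF_small_free Hrep' HNF Hf' Haf Hz.
    rewrite -Ez -Gb' //; congr (a _); apply/val_inj; rewrite !Vins //.
  + exists (fun k => b (unren k)); split.
      move=> i; rewrite /unren ltn_ord -Gb' //; congr (a _); apply/val_inj; rewrite Vins //.
    move=> j; rewrite /= !ffunE; case: ifP => Hj; last by rewrite inE.
    have Hf := nth_In f0 Hj; have [Hf' Ha3] := InT _ Hf.
    have Hv : forall t, t < 3 -> b (unren (inord (ren (nth 0 (xs (nth f0 T j)) t)) : 'I_KK)) =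
        b (nth 0 (xs (nth f0 T j)) t).
      move=> t Ht; have [H1 H2] := renT _ _ Hf (Hxs _ Ha3 t Ht).
      by rewrite inordK // H2.
    rewrite /trif /= inE; apply/asboolP; rewrite !Hv //.
    by apply/(tern_frel b (Hrel _ Hf') Ha3); apply: Fb'.
- move=> [PB [v [Hv PT]]]; apply/(rep_bond _ i0 Hrep').
  exists (fun x => v (ren x)); split.
    move=> x Hx; have Hxn : x < n by rewrite -HG.
    by rewrite /ren Hxn -(Hv (insubd i0 x)) Vins.
  apply/List.Forall_forall => k Hk.
  case Hk3: (arity k == 3).
    have HkT : List.In k T := In_filter Hk Hk3.
    have [j [Hj Ej]] := In_nth f0 HkT.
    have Hjm : j < m.
      apply: (leq_trans Hj); rewrite /T size_filter; apply: (leq_trans _ Hm); exact: Hm'.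
    have Ha3 : arity k = 3 by apply/eqP.
    have := PT (Ordinal Hjm); rewrite /= !ffunE /= Hj Ej inE => /asboolP.
    rewrite !inordK; try by apply: (renT _ _ HkT (Hxs _ Ha3 _ _)).1.
    by move/(tern_frel (fun x => v (ren x)) (Hrel _ Hk) Ha3).
  have Hak : arity k <= 2 by have := Har k Hk; rewrite leq_eqVlt Hk3.
  case Ek: (fattrs k) => [|x xs0].
    have [b1 [_ F1]] := (rep_bond _ i0 Hrep').1 Ha1.
    move/List.Forall_forall: F1 => /(_ k Hk); apply: (proj1 (Hrel k Hk _ _ _)).
    by move=> z; rewrite Ek.
  have Hx : x \in fattrs k by rewrite Ek mem_head.
  have Hxn := NF_small_free Hrep' HNF Hk Hak Hx.
  pose i := insubd i0 x; have Vi : val i = x by rewrite Vins.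
  have HkSm : List.In k Sm by apply: In_filter; rewrite // Hk3.
  case E: (fo i) => [g|]; last first.
    by have := List.find_none _ _ E k HkSm; rewrite Vi Hx.
  have [Hg Hig] := List.find_some _ _ E; have [Hg' Hag] := InSm g Hg.
  rewrite Vi in Hig.
  have Egk : g = k.
    exact: (count1_uniq (p := fun f => x \in fattrs f) (HNF k Hk Hak x Hx) Hg' Hig Hk Hx).
  subst g; have := PB i; rewrite !ffunE E inE => /asboolP.
  apply: (proj1 (Hrel k Hk _ _ _)) => z Hz /=.
  have Hzn := NF_small_free Hrep' HNF Hk Hak Hz.
  case: eqP => [Ez|/eqP Hzi].
    by rewrite /ren Hzn Ez Hv.
  have Hzx : z != x by rewrite -Vi.
  have Ez := partner_spec Hig Hak Hz Hzx.
  have -> : partner k i = z by rewrite Ez; congr partner; exact: Vi.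
  by rewrite /ren Hzn -(Hv (insubd i z)) Vins.
Qed.

End Count.

Local Open Scope ring_scope.

Lemma prod_ge (j : nat) (y : rat) : (j.+1)%:R <= y -> ((j.+1)`!)%:R <= \prod_(i < j) (y - i%:R).
Proof.
elim: j y => [|j IH] y Hy; first by rewrite big_ord0.
rewrite big_ord_recl /= subr0.
have -> : \prod_(i < j) (y - (lift ord0 i)%:R) = \prod_(i < j) ((y - 1) - i%:R).
  by apply: eq_bigr => i _; rewrite /= /bump /= natrD; ring.
rewrite factS natrM; apply: ler_pM => //.
have := IH (y - 1); rewrite lerBrDr natr1; apply; exact: Hy.
Qed.

Lemma gbinom_ge (n : nat) (x : rat) : (2 <= n)%N -> n%:R <= x -> x <= gbinom x n.-1.
Proof.
move=> Hn Hx; rewrite /gbinom.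
case: n Hn Hx => [|[|k]] // _ Hx /=.
rewrite big_ord_recl /= subr0.
have -> : \prod_(i < k) (x - (lift ord0 i)%:R) = \prod_(i < k) ((x - 1) - i%:R).
  by apply: eq_bigr => i _; rewrite /= /bump /= natrD; ring.
have Hx0 : 0 < x by apply: lt_le_trans Hx; rewrite ltr0n.
have Hf : (0 : rat) < (k.+1)`!%:R by rewrite ltr0n fact_gt0.
rewrite ler_pdivlMr // ler_pM2l //.
by apply: prod_ge; rewrite lerBrDr natr1.
Qed.

Local Close Scope ring_scope.

Lemma leq_expb a b e : a <= b -> a ^ e <= b ^ e.
Proof. move=> H; elim: e => // e IH; rewrite !expnS; exact: leq_mul. Qed.

Lemma card_Data_le (D : finType) n m :
  #|{: Data D n m}| <= 2 ^ (3 * m * KK n m + m * (#|D| * #|D| * #|D|) + n * n + n * (#|D| * #|D|) + 1).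
Proof.
rewrite card_Data.
set K := KK n m; set d := #|D|.
have h1 : (K * K * K) ^ m <= 2 ^ (3 * m * K).
  have : K * K * K <= 2 ^ K * 2 ^ K * 2 ^ K by rewrite !leq_mul // ltnW // ltn_expl.
  move/(leq_expb m); rewrite -!expnD -expnM.
  by have -> : (K + K + K) * m = 3 * m * K by lia.
have h2 : n ^ n <= 2 ^ (n * n).
  by rewrite expnM; apply: leq_expb; rewrite ltnW // ltn_expl.
apply: (leq_trans (leq_mul (leq_mul (leq_mul h1 (leqnn _)) (leq_mul h2 (leqnn _))) (leqnn 2))).
rewrite -!expnM -!expnD -[X in _ * X](expn1 2) -expnD leq_exp2l //; lia.
Qed.

Lemma ineq1 n m d : 4 <= n -> n <= 3 * m -> 3 * m + n < 2 * d ->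
  3 * m * (n + 3 * m).+1 + m * (d * d * d) + n * n + n * (d * d) + 1 < d ^ n.
Proof.
move=> Hn Hnm Hd.
have Hd4 : d ^ 4 <= d ^ n by rewrite leq_pexp2l //; lia.
apply: (leq_trans _ Hd4).
have Hn' : n <= d - 1 by lia.
have H3m : 3 * m <= 2 * d - 5 by lia.
have HK : (n + 3 * m).+1 <= 2 * d by lia.
have E1 : 3 * m * (n + 3 * m).+1 <= (2 * d - 5) * (2 * d) by apply: leq_mul.
have E2 : 3 * (m * (d * d * d)) <= (2 * d - 5) * (d * d * d) by rewrite mulnA leq_mul.
have E3 : n * n <= (d - 1) * (d - 1) by apply: leq_mul.
have E4 : n * (d * d) <= (d - 1) * (d * d) by apply: leq_mul.
have Hd6 : 6 <= d by lia.
rewrite expnS !expnS expn0 muln1.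
have [e E] : exists e, d = e + 6 by exists (d - 6); lia.
have Ea : 2 * d - 5 = 2 * e + 7 by lia.
have Eb : d - 1 = e + 5 by lia.
rewrite Ea Eb in E1 E2 E3 E4; rewrite E in E1 E2 E3 E4 *.
clear -E1 E2 E3 E4; lia.
Qed.

Lemma ineq2 n m d : 4 <= n -> 3 * m * (n + 3 * m).+1 + m + n * n + n + 3 <= d ->
  3 * m * (n + 3 * m).+1 + m * (d * d * d) + n * n + n * (d * d) + 1 + 1 + d <= d ^ n.
Proof.
move=> Hn Hd.
have Hd4 : d ^ 4 <= d ^ n by rewrite leq_pexp2l //; lia.
apply: leq_trans Hd4; rewrite !expnS expn0 muln1.
set K := (n + 3 * m).+1.
set C := 3 * m * K + m + n * n + n + 3 in Hd.
have Hd1 : 1 <= d by lia.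
have HX1 : 1 <= d * d * d by rewrite !muln_gt0 Hd1.
have HXd : d <= d * d * d by rewrite -mulnA leq_pmulr // muln_gt0 Hd1.
have HX2 : d * d <= d * d * d by rewrite leq_pmulr.
have F1 : 3 * m * K + n * n + 3 <= (3 * m * K + n * n + 3) * (d * d * d) by rewrite leq_pmulr.
have F2 : n * (d * d) <= n * (d * d * d) by rewrite leq_mul.
have F3 : C * (d * d * d) <= d * (d * d * d) by rewrite leq_mul.
have -> : d * (d * (d * d)) = d * (d * d * d) by rewrite !mulnA.
move: F1 F2 F3 HXd HX1; rewrite /C; move: (d * d * d) (d * d) => X Y; lia.
Qed.

Section Final.
Variables (n m : nat).

Lemma card_rel (D : finType) : #|{: {set {ffun 'I_n -> D}}}| = 2 ^ (#|D| ^ n).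
Proof. by have := card_powerset [set: {ffun 'I_n -> D}]; rewrite powersetT !cardsT card_ffun card_ord. Qed.

Lemma count_le (D : finType) : 0 < n ->
  #|[set R : relation D n | `[< ter_le R m >] ]| <= #|{: Data D n m}|.
Proof.
move=> Hn; apply: leq_trans (leq_imset_card (@Phi D n m) {: Data D n m}).
apply: subset_leq_card; apply/subsetP => R; rewrite inE => /asboolP HR.
have [dat ->] := rep_Phi Hn HR; exact: imset_f.
Qed.

Lemma share_lt1 (D : finType) :
  #|[set R : relation D n | `[< ter_le R m >] ]| < 2 ^ (#|D| ^ n) -> (share D n m < 1)%R.
Proof.
move=> H; rewrite /share ltr_pdivrMr ?ltr0n ?expn_gt0 // mul1r ltr_nat //.
Qed.

Lemma share_lt1_ex (D : finType) : (share D n m < 1)%R -> exists R : relation D n, ~ ter_le R m.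
Proof.
move=> H; apply: Classical_Prop.NNPP => Hno.
have E : [set R : relation D n | `[< ter_le R m >] ] = setT.
  apply/setP => R; rewrite !inE; apply/asboolP; apply: Classical_Prop.NNPP => HR.
  by apply: Hno; exists R.
by move: H; rewrite /share E cardsT card_rel divff ?ltxx // pnatr_eq0 -lt0n expn_gt0.
Qed.


Lemma part1 (D : finType) : 4 <= n -> 1 < #|D| ->
  (gbinom ((3 * m + n)%:R / 2%:R) n.-1 < #|D|%:R)%R -> (share D n m < 1)%R.
Proof.
move=> Hn HD Hg; apply: share_lt1.
case: (leqP n (3 * m)) => Hnm.
- have H2d : 3 * m + n < 2 * #|D|.
    have Hx : (n%:R <= (3 * m + n)%:R / 2%:R :> rat)%R.
      by rewrite ler_pdivlMr // -natrM ler_nat; lia.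
    have := Order.POrderTheory.le_lt_trans (gbinom_ge (ltnW (ltnW Hn)) Hx) Hg.
    by rewrite ltr_pdivrMr // -natrM ltr_nat; lia.
  have Hn0 : 0 < n by lia.
  apply: leq_ltn_trans (count_le D Hn0) _.
  apply: leq_ltn_trans (card_Data_le D n m) _.
  by rewrite ltn_exp2l // /KK; apply: ineq1.
- have [d0 [d1 [_ _ Hd]]] := card_gt1P HD.
  have HE := Eq_not_ter Hd (ltnW Hn) Hnm.
  apply: (@leq_ltn_trans #|[set~ Eqrel D n]|).
    apply: subset_leq_card; apply/subsetP => R; rewrite !inE => /asboolP HR.
    by apply/eqP => E; subst; exact: HE HR.
  rewrite cardsC1 card_rel; have := expn_gt0 2 (#|D| ^ n); lia.
Qed.

Lemma part2 : 4 <= n -> forall eps : rat, (0 < eps)%R ->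
  exists N : nat, forall D : finType, N <= #|D| -> (share D n m < eps)%R.
Proof.
move=> Hn eps He.
pose C := 3 * m * (n + 3 * m).+1 + m + n * n + n + 3.
pose N1 := Num.bound (eps^-1).
exists (maxn C N1) => D; rewrite geq_max => /andP [hC hN1].
set d := #|D| in hC hN1 *.
have HS := count_le D (ltnW (ltnW (ltnW Hn))).
have HB := card_Data_le D n m.
have HI := ineq2 Hn hC.
rewrite /KK in HB.
set S := #|[set R : relation D n | `[< ter_le R m >] ]| in HS *.
set E := 3 * m * (n + 3 * m).+1 + m * (d * d * d) + n * n + n * (d * d) + 1 in HB HI.
have Hnat : (S + 1) * 2 ^ d <= 2 ^ (d ^ n).
  have h1 : S + 1 <= 2 ^ (E + 1).
    rewrite expnD expn1 muln2 -addnn; apply: leq_add; first exact: leq_trans HS HB.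
    exact: expn_gt0.
  apply: leq_trans (leq_mul h1 (leqnn _)) _; rewrite -expnD leq_exp2l //.
have hZ : (eps^-1 < (2 ^ d)%:R)%R.
  apply: (Order.POrderTheory.lt_le_trans (archi_boundP _)); first by rewrite invr_ge0 ltW.
  by rewrite ler_nat; apply: leq_trans hN1 (ltnW (ltn_expl _ _)).
have hZ' : (1 < eps * (2 ^ d)%:R)%R.
  by move: hZ; rewrite -div1r ltr_pdivrMr // mulrC.
have hY : ((S%:R + 1) * (2 ^ d)%:R <= (2 ^ (d ^ n))%:R :> rat)%R.
  by rewrite natr1 -natrM ler_nat -addn1.
rewrite /share ltr_pdivrMr ?ltr0n ?expn_gt0 //.
apply: (Order.POrderTheory.lt_le_trans _ (ler_wpM2l (ltW He) hY)).
have -> : (eps * ((S%:R + 1) * (2 ^ d)%:R) = (S%:R + 1) * (eps * (2 ^ d)%:R) :> rat)%R by ring.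
have hs : (0 <= S%:R :> rat)%R by rewrite ler0n.
move: hZ' hs; move: (eps * _)%R (S%:R : rat) => W s; nra.
Qed.

End Final.

Theorem theorem45 (n m : nat) :
  (4 <= n)%N ->
  (forall D : finType, (1 < #|D|)%N ->
     (gbinom ((3 * m + n)%:R / 2%:R) n.-1 < #|D|%:R)%R ->
     (share D n m < 1)%R)
  /\ (forall eps : rat, (0 < eps)%R ->
        exists N : nat, forall D : finType, (N <= #|D|)%N -> (share D n m < eps)%R)
  /\ (forall k : nat, exists (D : finType) (R : relation D n), ~ ter_le R k).
Proof.
move=> Hn; split; [|split].
- by move=> D HD Hg; apply: part1.
- exact: part2.
- move=> k; have [N HN] := @part2 n k Hn 1%R ltr01.
  exists ('I_N : finType); apply: share_lt1_ex; apply: HN; by rewrite card_ord.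
Qed.
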